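(* Let $r,k\geq2$ with $(r,k)\neq(2,2)$. There exist positive constants $K_1,K_2,K_3$ such that for any $0<\delta<\frac12$ and $c=c_{r,k}+n^{-\delta}$: $$\mu(c)-\mu_{r,k}=K_1n^{-\delta/2}+O(n^{-\delta}),\quad \alpha(c)-\alpha=K_2n^{-\delta/2}+O(n^{-\delta}),\quad \beta(c)-\beta=K_3n^{-\delta/2}+O(n^{-\delta}).$$
   Context: $f_t(\mu)=e^{-\mu}\sum_{i\geq t}\mu^i/i!$. Let $h(\mu)=\mu/f_{k-1}(\mu)^{r-1}$, $c_{r,k}=\inf_{\mu>0}(r-1)!h(\mu)$, and $\mu_{r,k}$ the unique minimizer, so $c_{r,k}=(r-1)!h(\mu_{r,k})$. For $c\geq c_{r,k}$, $\mu(c)$ is the largest solution of $c=(r-1)!h(\mu)$. Set $\alpha=f_k(\mu_{r,k})$, $\beta=\frac1r\mu_{r,k}f_{k-1}(\mu_{r,k})$, $\alpha(c)=f_k(\mu(c))$, $\beta(c)=\frac1r\mu(c)f_{k-1}(\mu(c))$. *)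

(* Defs.v *)
From Stdlib Require Import Reals Lra ClassicalEpsilon.
From Coquelicot Require Import Coquelicot.
Open Scope R_scope.

Definition ftail (t : nat) (mu : R) : R :=
  exp (- mu) * Series (fun i : nat => if Nat.leb t i then mu ^ i / INR (Factorial.fact i) else 0).

Definition hfun (r k : nat) (mu : R) : R :=
  mu / (ftail (k - 1) mu) ^ (r - 1).

Definition Hfun (r k : nat) (mu : R) : R := INR (Factorial.fact (r - 1)) * hfun r k mu.

Definition c_rk (r k : nat) : R :=
  real (Glb_Rbar (fun y => exists mu, 0 < mu /\ y = Hfun r k mu)).

Definition mu_rk (r k : nat) : R :=
  epsilon (inhabits 0)
    (fun m => 0 < m /\ forall x, 0 < x -> Hfun r k m <= Hfun r k x).

Definition mu_c (r k : nat) (c : R) : R :=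
  epsilon (inhabits 0)
    (fun m => 0 < m /\ c = Hfun r k m /\
              forall x, 0 < x -> c = Hfun r k x -> x <= m).

Definition alpha0 (r k : nat) : R := ftail k (mu_rk r k).
Definition beta0 (r k : nat) : R := / INR r * mu_rk r k * ftail (k - 1) (mu_rk r k).
Definition alpha_c (r k : nat) (c : R) : R := ftail k (mu_c r k c).
Definition beta_c (r k : nat) (c : R) : R :=
  / INR r * mu_c r k c * ftail (k - 1) (mu_c r k c).

Definition expansion (g : nat -> R) (K delta : R) : Prop :=
  exists C N, forall n : nat, (N <= n)%nat ->
    Rabs (g n - K * Rpower (INR n) (- (delta / 2))) <= C * Rpower (INR n) (- delta).

(* Main.v *)
Require Import Defs.
From Stdlib Require Import Reals Lra Lia ClassicalEpsilon.
From Coquelicot Require Import Coquelicot.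
Open Scope R_scope.

Fixpoint Sf (n : nat) (y : R) : R :=
  match n with O => 0 | S m => Sf m y + y ^ m / INR (Factorial.fact m) end.

Lemma head_sum (t : nat) (mu : R) (N : nat) :
  sum_f_R0 (fun i => if Nat.leb t i then 0 else mu ^ i / INR (Factorial.fact i)) N
  = Sf (Nat.min t (S N)) mu.
Proof.
  induction N as [|N IH].
  - simpl. destruct t as [|t]; simpl; [lra|]. destruct t; simpl; lra.
  - rewrite tech5, IH. destruct (Nat.leb t (S N)) eqn:Ht.
    + apply Nat.leb_le in Ht. rewrite !Nat.min_l by lia. lra.
    + apply Nat.leb_gt in Ht. rewrite !Nat.min_r by lia. simpl Sf at 2. reflexivity.
Qed.

Lemma ftail_eq (t : nat) (mu : R) : ftail t mu = exp (- mu) * (exp mu - Sf t mu).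
Proof.
  unfold ftail. f_equal.
  apply is_series_unique.
  assert (H1 : is_series (fun i => mu ^ i / INR (Factorial.fact i)) (exp mu)).
  { apply is_series_Reals. unfold exp. destruct (exist_exp mu) as [l Hl]. simpl.
    unfold exp_in in Hl. intros eps He. destruct (Hl eps He) as [N HN].
    exists N. intros n Hn. specialize (HN n Hn).
    erewrite sum_eq; [exact HN|]. intros i _. simpl. unfold Rdiv. ring. }
  assert (H2 : is_series (fun i => if Nat.leb t i then 0 else mu ^ i / INR (Factorial.fact i)) (Sf t mu)).
  { apply is_series_Reals. intros eps He. exists t. intros n Hn.
    rewrite head_sum, Nat.min_l by lia. unfold R_dist. rewrite Rminus_eq_0, Rabs_R0. exact He. }
  generalize (is_series_minus _ _ _ _ H1 H2). apply is_series_ext.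
  intros n. simpl. change (plus ?a (opp ?b)) with (a - b). destruct (Nat.leb t n); ring.
Qed.

Fixpoint Cn (n : nat) (f : R -> R) : Prop :=
  match n with
  | O => True
  | S n => exists f', (forall x, 0 < x -> is_derive f x (f' x)) /\ Cn n f'
  end.

Lemma is_derive_eq (f : R -> R) (x l l' : R) : is_derive f x l -> @eq R l l' -> is_derive f x l'.
Proof. intros H <-; exact H. Qed.

Lemma Cn_le n f : Cn (S n) f -> Cn n f.
Proof.
  revert f; induction n as [|n IH]; intros f H; [exact I|].
  destruct H as [f' [H1 H2]]. exists f'. split; auto.
Qed.

Lemma Cn_ext n f g : (forall x, 0 < x -> f x = g x) -> Cn n f -> Cn n g.
Proof.
  destruct n as [|n]; intros He H; [exact I|].
  destruct H as [f' [H1 H2]]. exists f'. split; auto.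
  intros x Hx. apply is_derive_ext_loc with f; [|auto].
  assert (Hp : 0 < x / 2) by lra.
  exists (mkposreal _ Hp). intros t Ht. apply He.
  unfold ball in Ht; simpl in Ht; unfold AbsRing_ball, abs, minus, plus, opp in Ht; simpl in Ht.
  apply Rabs_lt_between in Ht. lra.
Qed.


Lemma Cn_const n c : Cn n (fun _ => c).
Proof.
  revert c; induction n as [|n IH]; intros c; [exact I|].
  exists (fun _ => 0). split; [intros; auto_derive; auto| apply IH].
Qed.

Lemma Cn_id n : Cn n (fun x => x).
Proof.
  destruct n as [|n]; [exact I|].
  exists (fun _ => 1). split; [intros; auto_derive; auto| apply Cn_const].
Qed.

Lemma Cn_plus n f g : Cn n f -> Cn n g -> Cn n (fun x => f x + g x).
Proof.
  revert f g; induction n as [|n IH]; intros f g Hf Hg; [exact I|].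
  destruct Hf as [f' [Hf1 Hf2]]. destruct Hg as [g' [Hg1 Hg2]].
  exists (fun x => f' x + g' x). split; auto.
  intros x Hx. apply (is_derive_plus f g); auto.
Qed.

Lemma Cn_mult n f g : Cn n f -> Cn n g -> Cn n (fun x => f x * g x).
Proof.
  revert f g; induction n as [|n IH]; intros f g Hf Hg; [exact I|].
  pose proof (Cn_le _ _ Hf) as Hf0. pose proof (Cn_le _ _ Hg) as Hg0.
  destruct Hf as [f' [Hf1 Hf2]]. destruct Hg as [g' [Hg1 Hg2]].
  exists (fun x => f' x * g x + f x * g' x). split.
  - intros x Hx. apply (is_derive_mult f g); auto. intros; apply Rmult_comm.
  - apply Cn_plus; apply IH; auto.
Qed.

Lemma Cn_scal n c f : Cn n f -> Cn n (fun x => c * f x).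
Proof. intros H. apply Cn_mult; auto using Cn_const. Qed.

Lemma Cn_opp n f : Cn n f -> Cn n (fun x => - f x).
Proof. intros H. apply (Cn_ext _ (fun x => (-1) * f x)); [intros; ring|]. now apply Cn_scal. Qed.

Lemma Cn_minus n f g : Cn n f -> Cn n g -> Cn n (fun x => f x - g x).
Proof. intros. apply Cn_plus; auto. now apply Cn_opp. Qed.

Lemma Cn_pow n m f : Cn n f -> Cn n (fun x => f x ^ m).
Proof.
  intros H; induction m as [|m IH]; simpl; [apply Cn_const|]. now apply Cn_mult.
Qed.

Lemma Cn_inv n f : (forall x, 0 < x -> f x <> 0) -> Cn n f -> Cn n (fun x => / f x).
Proof.
  intros Hnz. revert f Hnz; induction n as [|n IH]; intros f Hnz Hf; [exact I|].
  pose proof (Cn_le _ _ Hf) as Hf0.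
  destruct Hf as [f' [Hf1 Hf2]].
  exists (fun x => - f' x * (/ f x * / f x)). split.
  - intros x Hx. eapply is_derive_eq; [apply is_derive_inv; [apply Hf1; auto| auto]|].
    specialize (Hnz x Hx). simpl. field. auto.
  - apply Cn_mult; [now apply Cn_opp|]. apply Cn_mult; apply IH; auto.
Qed.

Lemma Cn_exp n c : Cn n (fun x => exp (c * x)).
Proof.
  induction n as [|n IH]; [exact I|].
  exists (fun x => c * exp (c * x)). split.
  - intros x _. auto_derive; auto. ring.
  - now apply Cn_scal.
Qed.

Lemma Cn_deriv n f f' : (forall x, 0 < x -> is_derive f x (f' x)) -> Cn n f' -> Cn (S n) f.
Proof. intros; exists f'; auto. Qed.

Lemma Cn_bound f : Cn 1 f -> forall u v, 0 < u -> u <= v ->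
  exists M, forall t, u <= t <= v -> Rabs (f t) <= M.
Proof.
  intros [f' [Hd _]] u v Hu Huv.
  assert (Hc : forall c, u <= c <= v -> continuity_pt f c).
  { intros c Hc. apply continuity_pt_filterlim. apply (ex_derive_continuous f).
    exists (f' c). apply Hd. lra. }
  destruct (continuity_ab_maj f u v Huv Hc) as [M1 [HM1 _]].
  destruct (continuity_ab_min f u v Huv Hc) as [M2 [HM2 _]].
  exists (Rmax (f M1) (- f M2)). intros t Ht.
  specialize (HM1 t Ht). specialize (HM2 t Ht).
  unfold Rabs; destruct Rcase_abs; [apply Rle_trans with (- f M2); [lra|apply Rmax_r]|].
  apply Rle_trans with (f M1); [lra|apply Rmax_l].
Qed.


Lemma Cn_deriv_inv n f g : Cn (S n) f -> (forall x, 0 < x -> is_derive f x (g x)) -> Cn n g.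
Proof.
  intros [f' [H1 H2]] Hg. apply (Cn_ext _ f'); auto.
  intros x Hx. rewrite <- (is_derive_unique f x (g x)) by auto.
  symmetry. apply is_derive_unique. auto.
Qed.

Lemma mvt (f f' : R -> R) a b : a < b -> (forall c, a <= c <= b -> is_derive f c (f' c)) ->
  exists c, a < c < b /\ f b - f a = f' c * (b - a).
Proof.
  intros Hab Hd. destruct (MVT_cor2 f f' a b Hab) as [c [H1 H2]].
  - intros c Hc. apply is_derive_Reals. auto.
  - exists c; auto.
Qed.

Lemma mvt_bound (f f' : R -> R) u v K : u <= v -> (forall c, u <= c <= v -> is_derive f c (f' c)) ->
  (forall c, u <= c <= v -> Rabs (f' c) <= K) -> Rabs (f v - f u) <= K * (v - u).
Proof.
  intros Huv Hd Hb. destruct (Req_dec u v) as [<-|Hne].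
  - rewrite Rminus_eq_0, Rabs_R0. lra.
  - destruct (mvt f f' u v) as [c [Hc He]]; [lra|auto|].
    rewrite He, Rabs_mult, (Rabs_right (v - u)) by lra.
    apply Rmult_le_compat_r; [lra|]. apply Hb; lra.
Qed.

Lemma taylor2 f f1 m0 : (forall x, 0 < x -> is_derive f x (f1 x)) -> Cn 2 f1 -> 0 < m0 ->
  exists B, forall x, 0 <= x <= 1 -> Rabs (f (m0 + x) - f m0 - f1 m0 * x) <= B * x ^ 2.
Proof.
  intros Hf H2 Hm.
  destruct H2 as [f2 [Hf1 H3]].
  destruct (Cn_bound f2 H3 m0 (m0 + 1)) as [M HM]; try lra.
  exists M. intros x Hx.
  assert (Hb : forall t, m0 <= t <= m0 + x -> Rabs (f1 t - f1 m0) <= M * x).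
  { intros t Ht. apply Rle_trans with (M * (t - m0)).
    - apply (mvt_bound f1 f2); try lra.
      + intros c Hc; apply Hf1; lra.
      + intros c Hc; apply HM; lra.
    - assert (0 <= M) by (specialize (HM m0); apply Rle_trans with (Rabs (f2 m0)); [apply Rabs_pos| apply HM; lra]).
      apply Rmult_le_compat_l; lra. }
  pose (g := fun t => f t - f1 m0 * t).
  assert (Hg := mvt_bound g (fun t => f1 t - f1 m0) m0 (m0 + x) (M * x)).
  unfold g in Hg. replace (m0 + x - m0) with x in Hg by ring.
  replace (f (m0 + x) - f m0 - f1 m0 * x) with (f (m0 + x) - f1 m0 * (m0 + x) - (f m0 - f1 m0 * m0)) by ring.
  replace (M * x ^ 2) with (M * x * x) by ring.
  apply Hg; [lra| |exact Hb].
  intros c Hc. apply (is_derive_minus f (fun t => f1 m0 * t)); [apply Hf; lra|].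
  eapply is_derive_eq; [apply is_derive_scal, is_derive_id|]. simpl; unfold one; simpl; ring.
Qed.

Lemma taylor3 f f1 f2 m0 : (forall x, 0 < x -> is_derive f x (f1 x)) ->
  (forall x, 0 < x -> is_derive f1 x (f2 x)) -> Cn 2 f2 -> 0 < m0 -> f1 m0 = 0 ->
  exists B, forall x, 0 <= x <= 1 -> Rabs (f (m0 + x) - f m0 - f2 m0 / 2 * x ^ 2) <= B * x ^ 3.
Proof.
  intros Hf Hf1 H2 Hm H0.
  destruct H2 as [f3 [Hf2 H3]].
  destruct (Cn_bound f3 H3 m0 (m0 + 1)) as [M HM]; try lra.
  assert (HM0 : 0 <= M) by (apply Rle_trans with (Rabs (f3 m0)); [apply Rabs_pos| apply HM; lra]).
  exists M. intros x Hx.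
  assert (Hb : forall t, m0 <= t <= m0 + 1 -> Rabs (f2 t - f2 m0) <= M * (t - m0)).
  { intros t Ht. apply (mvt_bound f2 f3); try lra.
    + intros c Hc; apply Hf2; lra.
    + intros c Hc; apply HM; lra. }
  assert (Hb1 : forall y, 0 <= y <= 1 -> Rabs (f1 (m0 + y) - f2 m0 * y) <= M * y ^ 2).
  { intros y Hy.
    assert (Hg := mvt_bound (fun t => f1 t - f2 m0 * (t - m0)) (fun t => f2 t - f2 m0) m0 (m0 + y) (M * y)).
    simpl in Hg. rewrite H0 in Hg. replace (m0 + y - m0) with y in Hg by ring.
    replace (M * y ^ 2) with (M * y * y) by ring.
    replace (f1 (m0 + y) - f2 m0 * y) with (f1 (m0 + y) - f2 m0 * y - (0 - f2 m0 * (m0 - m0))) by ring.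
    apply Hg; [lra| |].
    - intros c Hc. apply (is_derive_minus f1 (fun t => f2 m0 * (t - m0))); [apply Hf1; lra|].
      eapply is_derive_eq; [apply is_derive_scal; auto_derive; auto|]. simpl. ring.
    - intros c Hc. apply Rle_trans with (M * (c - m0)); [apply Hb; lra|].
      apply Rmult_le_compat_l; lra. }
  assert (Hg := mvt_bound (fun t => f t - f2 m0 / 2 * (t - m0) ^ 2) (fun t => f1 t - f2 m0 * (t - m0)) m0 (m0 + x) (M * x ^ 2)).
  simpl in Hg. replace (m0 + x - m0) with x in Hg by ring.
  replace (M * x ^ 3) with (M * x ^ 2 * x) by ring.
  replace (f (m0 + x) - f m0 - f2 m0 / 2 * x ^ 2) with
    (f (m0 + x) - f2 m0 / 2 * (x * (x * 1)) - (f m0 - f2 m0 / 2 * ((m0 - m0) * ((m0 - m0) * 1)))) by ring.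
  apply Hg; [lra| |].
  - intros c Hc. apply (is_derive_minus f (fun t => f2 m0 / 2 * ((t - m0) * ((t - m0) * 1)))); [apply Hf; lra|].
    eapply is_derive_eq; [apply is_derive_scal; auto_derive; auto|]. simpl. field.
  - intros c Hc. replace c with (m0 + (c - m0)) at 1 by ring.
    apply Rle_trans with (M * (c - m0) ^ 2); [apply Hb1; lra|].
    apply Rmult_le_compat_l; [lra|]. replace (x * (x * 1)) with (x ^ 2) by ring. apply pow_incr; lra.
Qed.

Lemma is_derive_mult' (f g : R -> R) (x df dg : R) : is_derive f x df -> is_derive g x dg ->
  is_derive (fun t => f t * g t) x (df * g x + f x * dg).
Proof. intros H1 H2. apply (is_derive_mult f g x df dg H1 H2). intros; apply Rmult_comm. Qed.

Lemma is_derive_plus' (f g : R -> R) (x df dg : R) : is_derive f x df -> is_derive g x dg ->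
  is_derive (fun t => f t + g t) x (df + dg).
Proof. intros H1 H2. apply (is_derive_plus f g x df dg H1 H2). Qed.

Lemma is_derive_minus' (f g : R -> R) (x df dg : R) : is_derive f x df -> is_derive g x dg ->
  is_derive (fun t => f t - g t) x (df - dg).
Proof. intros H1 H2. apply (is_derive_minus f g x df dg H1 H2). Qed.

Lemma is_derive_scal' (f : R -> R) (x c df : R) : is_derive f x df ->
  is_derive (fun t => c * f t) x (c * df).
Proof. intros H1. apply (is_derive_scal f x c df H1). Qed.

Lemma is_derive_id' (x : R) : is_derive (fun t : R => t) x 1.
Proof. auto_derive; auto. Qed.

Lemma is_derive_const' (x c : R) : is_derive (fun _ : R => c) x 0.
Proof. auto_derive; auto. Qed.

Ltac fixeq := match goal with |- @eq _ ?a ?b => change (@eq R a b) end.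

Ltac rs := simpl; unfold Hierarchy.plus, Hierarchy.opp, Hierarchy.minus, Hierarchy.mult, Hierarchy.scal, Hierarchy.one, Hierarchy.zero; cbn -[INR Factorial.fact pow Rdiv exp Sf];
  try match goal with |- @eq _ ?a ?b => change (@eq R a b) end.

Definition E b y := exp y - Sf b y.
Definition p b y := y ^ (b - 1) / INR (Factorial.fact (b - 1)).
Definition q b y := y ^ b / INR (Factorial.fact b).
Definition D b y := y * (E b y + p b y) - INR b * E b y.

Lemma fact_pos n : 0 < INR (Factorial.fact n).
Proof. apply lt_0_INR, Factorial.lt_O_fact. Qed.

Lemma INR_S' n : (match n with 0%nat => 1 | S _ => INR n + 1 end) = INR n + 1.
Proof. destruct n; simpl; ring. Qed.

Lemma fact_S_INR n : INR (Factorial.fact n + n * Factorial.fact n) = (INR n + 1) * INR (Factorial.fact n).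
Proof. rewrite plus_INR, mult_INR. ring. Qed.

Lemma Sf_deriv n y : is_derive (Sf (S n)) y (Sf n y).
Proof.
  induction n as [|n IH].
  - simpl. auto_derive; auto; reflexivity.
  - change (Sf (S (S n))) with (fun y => Sf (S n) y + y ^ (S n) / INR (Factorial.fact (S n))).
    eapply is_derive_eq; [apply (is_derive_plus (Sf (S n))); [exact IH|]|].
    + auto_derive; auto; reflexivity.
    + simpl. change (match n with 0%nat => 1 | S _ => INR n + 1 end) with (INR (S n)).
      replace (Factorial.fact n + n * Factorial.fact n)%nat with (S n * Factorial.fact n)%nat by lia.
      rewrite mult_INR, S_INR. unfold plus. change (Sf (S n) y) with (Sf n y + y ^ n / INR (Factorial.fact n)).
      pose proof (fact_pos n). pose proof (pos_INR n). simpl AbelianMonoid.plus. field. split; lra.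
Qed.

Lemma E_deriv b y : (1 <= b)%nat -> is_derive (E b) y (E b y + p b y).
Proof.
  intros Hb. destruct b as [|b]; [lia|]. unfold E, p.
  eapply is_derive_eq; [apply (is_derive_minus exp (Sf (S b))); [apply is_derive_Reals, derivable_pt_lim_exp| apply Sf_deriv]|].
  rs. replace (b - 0)%nat with b by lia. ring.
Qed.

Lemma q_deriv b y : (1 <= b)%nat -> is_derive (q b) y (p b y).
Proof.
  intros Hb. destruct b as [|b]; [lia|]. unfold q, p.
  eapply is_derive_eq; [auto_derive; auto; reflexivity|].
  replace (S b - 1)%nat with b by lia.
  rewrite INR_S', fact_S_INR. pose proof (fact_pos b). pose proof (pos_INR b). rs.
  field. split; lra.
Qed.

Definition pd b y := INR (b - 1) * y ^ (pred (b - 1)) / INR (Factorial.fact (b - 1)).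

Lemma p_deriv b y : is_derive (p b) y (pd b y).
Proof.
  unfold p, pd. eapply is_derive_eq; [auto_derive; auto; reflexivity|].
  unfold one; simpl. field. pose proof (fact_pos (b - 1)). lra.
Qed.

Lemma pd_id b y : (1 <= b)%nat -> y * pd b y = (INR b - 1) * p b y.
Proof.
  intros Hb. unfold pd, p. replace (INR b - 1) with (INR (b - 1)) by (rewrite minus_INR by lia; reflexivity).
  pose proof (fact_pos (b - 1)).
  destruct (b - 1)%nat as [|m].
  - simpl in *. field; try lra.
  - simpl Init.Nat.pred. replace (y ^ S m) with (y * y ^ m) by (simpl; ring). field. lra.
Qed.

Lemma D_deriv b y : (1 <= b)%nat -> is_derive (D b) y (D b y + E b y).
Proof.
  intros Hb. unfold D.
  eapply is_derive_eq.
  - apply is_derive_minus'.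
    + apply is_derive_mult'. apply is_derive_id'.
      apply is_derive_plus'. apply E_deriv; auto. apply p_deriv.
    + apply is_derive_scal'. apply E_deriv; auto.
  - rewrite Rmult_plus_distr_l, (Rmult_plus_distr_l y (E b y)), pd_id by auto. ring.
Qed.

Lemma Sf_zero n : (1 <= n)%nat -> Sf n 0 = 1.
Proof.
  induction n as [|n IH]; intros Hn; [lia|].
  destruct n as [|n]; simpl. field. 
  simpl in IH. rewrite IH by lia. rewrite Rmult_0_l. unfold Rdiv. ring.
Qed.

Lemma E_zero b : (1 <= b)%nat -> E b 0 = 0.
Proof. intros. unfold E. rewrite Sf_zero, exp_0 by auto. ring. Qed.

Lemma Sf_nonneg n y : 0 <= y -> 0 <= Sf n y.
Proof.
  intros Hy. induction n as [|n IH]; simpl; [lra|].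
  apply Rplus_le_le_0_compat; auto. apply Rmult_le_pos; [apply pow_le; auto|].
  left; apply Rinv_0_lt_compat, fact_pos.
Qed.

Lemma p_pos b y : 0 < y -> 0 < p b y.
Proof. intros. unfold p. apply Rdiv_lt_0_compat; [apply pow_lt; auto| apply fact_pos]. Qed.

Lemma q_pos b y : 0 < y -> 0 < q b y.
Proof. intros. unfold q. apply Rdiv_lt_0_compat; [apply pow_lt; auto| apply fact_pos]. Qed.

Lemma ode_strict (W W' : R -> R) y : 0 < y -> (forall t, 0 <= t <= y -> is_derive W t (W' t)) -> W 0 = 0 ->
  (forall t, 0 < t < y -> W t < W' t) -> 0 < W y.
Proof.
  intros Hy Hd H0 Hlt.
  destruct (mvt (fun t => W t * exp (- t)) (fun t => (W' t - W t) * exp (- t)) 0 y) as [c [Hc He]]; auto.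
  - intros c Hc. eapply is_derive_eq.
    + apply is_derive_mult'. apply Hd; lra. auto_derive; auto; reflexivity.
    + cbv beta. ring.
  - rewrite H0 in He. specialize (Hlt c Hc). pose proof (exp_pos (- c)). pose proof (exp_pos (- y)).
    assert (0 < W y * exp (- y)) by (rewrite Rmult_0_l, Rminus_0_r in He; rewrite He; apply Rmult_lt_0_compat; [apply Rmult_lt_0_compat|]; lra).
    nra.
Qed.

Lemma ode_weak (W W' : R -> R) y : 0 <= y -> (forall t, 0 <= t <= y -> is_derive W t (W' t)) -> W 0 = 0 ->
  (forall t, 0 < t < y -> W t <= W' t) -> 0 <= W y.
Proof.
  intros Hy Hd H0 Hlt. destruct (Req_dec y 0) as [->|Hne]; [lra|].
  destruct (mvt (fun t => W t * exp (- t)) (fun t => (W' t - W t) * exp (- t)) 0 y) as [c [Hc He]]; [lra| |].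
  - intros c Hc. eapply is_derive_eq.
    + apply is_derive_mult'. apply Hd; lra. auto_derive; auto; reflexivity.
    + cbv beta. ring.
  - rewrite H0 in He. specialize (Hlt c Hc). pose proof (exp_pos (- c)). pose proof (exp_pos (- y)).
    assert (0 <= W y * exp (- y)) by (rewrite Rmult_0_l, Rminus_0_r in He; rewrite He; apply Rmult_le_pos; [apply Rmult_le_pos|]; lra).
    nra.
Qed.

Lemma E_pos b y : (1 <= b)%nat -> 0 < y -> 0 < E b y.
Proof.
  intros Hb Hy. apply (ode_strict (E b) (fun t => E b t + p b t)); auto.
  - intros; apply E_deriv; auto.
  - apply E_zero; auto.
  - intros t Ht. pose proof (p_pos b t). lra.
Qed.

Lemma D_pos b y : (1 <= b)%nat -> 0 < y -> 0 < D b y.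
Proof.
  intros Hb Hy. apply (ode_strict (D b) (fun t => D b t + E b t)); auto.
  - intros; apply D_deriv; auto.
  - unfold D. rewrite E_zero by auto. ring.
  - intros t Ht. pose proof (E_pos b t Hb (proj1 Ht)). lra.
Qed.

Lemma E_upper b y : (1 <= b)%nat -> 0 <= y -> E b y <= q b y * exp y.
Proof.
  intros Hb Hy. cut (0 <= q b y * exp y - E b y); [lra|].
  apply (ode_weak (fun t => q b t * exp t - E b t) (fun t => (q b t * exp t - E b t) + p b t * (exp t - 1))); auto.
  - intros t Ht. eapply is_derive_eq.
    + apply is_derive_minus'; [|apply E_deriv; auto].
      apply is_derive_mult'. apply q_deriv; auto. apply is_derive_Reals, derivable_pt_lim_exp.
    + ring.
  - cbv beta. rewrite E_zero by auto. unfold q. destruct b; [lia|]. simpl. fixeq. unfold Rdiv. ring.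
  - intros t Ht. pose proof (p_pos b t). assert (1 <= exp t) by (pose proof (exp_ineq1_le t); lra). nra.
Qed.

Lemma E_lower b y : (1 <= b)%nat -> 0 <= y -> q b y + q (S b) y <= E b y.
Proof.
  intros Hb Hy. cut (0 <= E b y - q b y - q (S b) y); [lra|].
  apply (ode_weak (fun t => E b t - q b t - q (S b) t) (fun t => (E b t - q b t - q (S b) t) + q (S b) t)); auto.
  - intros t Ht. eapply is_derive_eq.
    + apply is_derive_minus'; [|apply q_deriv; lia].
      apply is_derive_minus'; [apply E_deriv; auto| apply q_deriv; auto].
    + unfold p, q. replace (S b - 1)%nat with b by lia. ring.
  - cbv beta. rewrite E_zero by auto. unfold q. destruct b; [lia|]. simpl. fixeq. unfold Rdiv. ring.
  - intros t Ht. pose proof (q_pos (S b) t). lra.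
Qed.

Definition G b y := exp (- y) * E b y.
Definition Hx a b y := INR (Factorial.fact a) * (y / (G b y) ^ a).
Definition u a b y := INR a * y * p b y / E b y.
Definition Fa b y := exp (- y) * (E b y - q b y).
Definition Fb r b y := / INR r * y * G b y.

Lemma exp_neg_deriv y : is_derive (fun t => exp (- t)) y (- exp (- y)).
Proof. auto_derive; auto. ring. Qed.

Lemma G_deriv b y : (1 <= b)%nat -> is_derive (G b) y (exp (- y) * p b y).
Proof.
  intros Hb. unfold G. eapply is_derive_eq; [apply is_derive_mult'; [apply exp_neg_deriv| apply E_deriv; auto]|].
  cbv beta. ring.
Qed.

Lemma G_pos b y : (1 <= b)%nat -> 0 < y -> 0 < G b y.
Proof. intros. unfold G. apply Rmult_lt_0_compat; [apply exp_pos| apply E_pos; auto]. Qed.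

Lemma Hx_deriv a b y : (1 <= a)%nat -> (1 <= b)%nat -> 0 < y ->
  is_derive (Hx a b) y (Hx a b y * (1 - u a b y) / y).
Proof.
  intros Ha Hb Hy. unfold Hx.
  pose proof (G_pos b y Hb Hy) as HG. pose proof (E_pos b y Hb Hy) as HE.
  eapply is_derive_eq.
  - apply is_derive_scal'. apply is_derive_mult'. apply is_derive_id'.
    apply is_derive_inv. apply is_derive_pow. apply G_deriv; auto.
    apply pow_nonzero. lra.
  - cbv beta. unfold u, G in *. destruct a as [|a]; [lia|].
    simpl pred. simpl pow. field.
    pose proof (exp_pos (- y)). repeat split; try lra. apply pow_nonzero. lra.
Qed.

Lemma yp_q b y : (1 <= b)%nat -> y * p b y = INR b * q b y.
Proof.
  intros Hb. destruct b as [|b]; [lia|]. unfold p, q. replace (S b - 1)%nat with b by lia.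
  change (Factorial.fact (S b)) with (S b * Factorial.fact b)%nat. rewrite mult_INR.
  pose proof (fact_pos b). pose proof (pos_INR b). simpl pow. field. rewrite S_INR. lra.
Qed.

Lemma q_S b y : q (S b) y = q b y * y / (INR b + 1).
Proof.
  unfold q. change (Factorial.fact (S b)) with (S b * Factorial.fact b)%nat. rewrite mult_INR, S_INR.
  pose proof (fact_pos b). pose proof (pos_INR b). simpl pow. field. lra.
Qed.

Lemma u_deriv a b y : (1 <= b)%nat -> 0 < y ->
  is_derive (u a b) y (- INR a * p b y * D b y / (E b y) ^ 2).
Proof.
  intros Hb Hy. pose proof (E_pos b y Hb Hy) as HE. unfold u.
  eapply is_derive_eq.
  - apply is_derive_mult'. apply is_derive_mult'. apply is_derive_scal'. apply is_derive_id'.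
    apply p_deriv. apply is_derive_inv. apply E_deriv; auto. lra.
  - cbv beta. unfold D.
    replace ((INR a * 1 * p b y + INR a * y * pd b y) * / E b y) with
      (INR a * p b y / E b y + INR a * (y * pd b y) / E b y) by (field; lra).
    rewrite pd_id by auto. field. lra.
Qed.

Lemma Fa_deriv b y : (1 <= b)%nat -> is_derive (Fa b) y (exp (- y) * q b y).
Proof.
  intros Hb. unfold Fa. eapply is_derive_eq.
  - apply is_derive_mult'. apply exp_neg_deriv. apply is_derive_minus'. apply E_deriv; auto. apply q_deriv; auto.
  - cbv beta. ring.
Qed.

Lemma Fb_deriv r b y : (1 <= b)%nat -> is_derive (Fb r b) y (/ INR r * (G b y + y * (exp (- y) * p b y))).
Proof.
  intros Hb. unfold Fb. eapply is_derive_eq.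
  - apply is_derive_mult'. apply is_derive_scal'. apply is_derive_id'. apply G_deriv; auto.
  - cbv beta. ring.
Qed.

Lemma Cn_p n b : Cn n (p b).
Proof. unfold p, Rdiv. apply Cn_mult. apply Cn_pow, Cn_id. apply Cn_const. Qed.

Lemma Cn_q n b : Cn n (q b).
Proof. unfold q, Rdiv. apply Cn_mult. apply Cn_pow, Cn_id. apply Cn_const. Qed.

Lemma Cn_E n b : (1 <= b)%nat -> Cn n (E b).
Proof.
  intros Hb. induction n as [|n IH]; [exact I|].
  apply Cn_deriv with (fun y => E b y + p b y).
  - intros; apply E_deriv; auto.
  - apply Cn_plus; auto. apply Cn_p.
Qed.

Lemma Cn_expn n : Cn n (fun t => exp (- t)).
Proof. apply (Cn_ext _ (fun t => exp (-1 * t))); [intros; f_equal; ring| apply Cn_exp]. Qed.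

Lemma Cn_G n b : (1 <= b)%nat -> Cn n (G b).
Proof. intros. unfold G. apply Cn_mult; [apply Cn_expn| apply Cn_E; auto]. Qed.

Lemma Cn_Hx n a b : (1 <= b)%nat -> Cn n (Hx a b).
Proof.
  intros Hb. unfold Hx, Rdiv. apply Cn_scal. apply Cn_mult; [apply Cn_id|].
  apply Cn_inv; [| apply Cn_pow, Cn_G; auto].
  intros. apply pow_nonzero. pose proof (G_pos b x Hb H). lra.
Qed.

Lemma Cn_Fa n b : (1 <= b)%nat -> Cn n (Fa b).
Proof. intros. unfold Fa. apply Cn_mult; [apply Cn_expn| apply Cn_minus; [apply Cn_E; auto| apply Cn_q]]. Qed.

Lemma Cn_Fb n r b : (1 <= b)%nat -> Cn n (Fb r b).
Proof. intros. unfold Fb. apply Cn_mult; [apply Cn_scal, Cn_id| apply Cn_G; auto]. Qed.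

Section S.
Variables a b : nat.
Hypothesis Ha : (1 <= a)%nat.
Hypothesis Hb : (1 <= b)%nat.
Hypothesis Hab : (2 <= a * b)%nat.

Lemma INR_a_pos : 0 < INR a.
Proof. apply lt_0_INR. lia. Qed.

Lemma u'_neg y : 0 < y -> - INR a * p b y * D b y / (E b y) ^ 2 < 0.
Proof.
  intros Hy. pose proof INR_a_pos. pose proof (p_pos b y Hy). pose proof (D_pos b y Hb Hy).
  pose proof (E_pos b y Hb Hy).
  assert (0 < INR a * p b y * D b y / E b y ^ 2) by
    (apply Rdiv_lt_0_compat; [apply Rmult_lt_0_compat; [apply Rmult_lt_0_compat|]; lra | apply pow_lt; lra]).
  replace (- INR a * p b y * D b y / E b y ^ 2) with (- (INR a * p b y * D b y / E b y ^ 2)) by (field; lra).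
  lra.
Qed.

Lemma u_dec x y : 0 < x -> x < y -> u a b y < u a b x.
Proof.
  intros Hx0 Hxy.
  destruct (mvt (u a b) (fun t => - INR a * p b t * D b t / (E b t) ^ 2) x y) as [c [Hc He]]; auto.
  - intros c Hc. apply u_deriv; auto. lra.
  - pose proof (u'_neg c ltac:(lra)). nra.
Qed.

Lemma Hx_pos y : 0 < y -> 0 < Hx a b y.
Proof.
  intros Hy. unfold Hx. apply Rmult_lt_0_compat; [apply fact_pos|].
  apply Rdiv_lt_0_compat; auto. apply pow_lt, G_pos; auto.
Qed.

Lemma u_cont t : 0 < t -> continuity_pt (u a b) t.
Proof.
  intros Ht. apply continuity_pt_filterlim. apply (ex_derive_continuous (u a b)).
  eexists. apply u_deriv; auto.
Qed.

Lemma exp_half : exp (1/2) < 2.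
Proof.
  pose proof exp_le_3. assert (exp 1 = exp (1/2) * exp (1/2)) by (rewrite <- exp_plus; f_equal; field).
  pose proof (exp_pos (1/2)). nra.
Qed.

Lemma exists_m0 : exists m0, 0 < m0 /\ u a b m0 = 1.
Proof.
  assert (Hab' : 2 <= INR a * INR b) by (rewrite <- mult_INR; apply (le_INR 2); auto).
  pose proof INR_a_pos. assert (1 <= INR b) by (apply (le_INR 1); auto).
  set (Y := INR a * INR b * (INR b + 1)).
  assert (HY : 1/2 < Y) by (unfold Y; nra).
  assert (Hu1 : 1 < u a b (1/2)).
  { unfold u. rewrite Rmult_assoc, yp_q by auto.
    pose proof (E_upper b (1/2) Hb ltac:(lra)). pose proof (E_pos b (1/2) Hb ltac:(lra)).
    pose proof (q_pos b (1/2) ltac:(lra)). pose proof exp_half. pose proof (exp_pos (1/2)).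
    apply Rmult_lt_reg_r with (E b (1/2)); auto. unfold Rdiv. rewrite Rmult_assoc, Rinv_l by lra.
    nra. }
  assert (Hu2 : u a b Y < 1).
  { unfold u. rewrite Rmult_assoc, yp_q by auto.
    pose proof (E_lower b Y Hb ltac:(lra)) as HL. pose proof (E_pos b Y Hb ltac:(lra)).
    pose proof (q_pos b Y ltac:(lra)). rewrite q_S in HL.
    apply Rmult_lt_reg_r with (E b Y); auto. unfold Rdiv. rewrite Rmult_assoc, Rinv_l by lra.
    assert (q b Y * Y / (INR b + 1) = q b Y * (INR a * INR b)) by (unfold Y; field; lra).
    nra. }
  destruct (Ranalysis5.IVT_interv (fun t => 1 - u a b t) (1/2) Y) as [z [Hz Hz']]; auto.
  - intros t Ht. apply continuity_pt_minus. apply continuity_pt_const. intros ? ?; auto.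
    apply u_cont. lra.
  - lra.
  - lra.
  - exists z. split; lra.
Qed.

Variable m0 : R.
Hypothesis Hm0 : 0 < m0.
Hypothesis Hum0 : u a b m0 = 1.

Lemma Hx_dec x y : 0 < x -> x < y -> y <= m0 -> Hx a b y < Hx a b x.
Proof.
  intros Hx0 Hxy Hy.
  destruct (mvt (Hx a b) (fun t => Hx a b t * (1 - u a b t) / t) x y) as [c [Hc He]]; auto.
  - intros c Hc. apply Hx_deriv; auto. lra.
  - assert (u a b m0 < u a b c) by (apply u_dec; lra).
    pose proof (Hx_pos c ltac:(lra)).
    assert (Hx a b c * (1 - u a b c) / c < 0).
    { unfold Rdiv. apply Rmult_neg_pos; [|apply Rinv_0_lt_compat; lra].
      apply Rmult_pos_neg; lra. }
    nra.
Qed.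

Lemma Hx_inc x y : m0 <= x -> x < y -> Hx a b x < Hx a b y.
Proof.
  intros Hx0 Hxy.
  destruct (mvt (Hx a b) (fun t => Hx a b t * (1 - u a b t) / t) x y) as [c [Hc He]]; auto.
  - intros c Hc. apply Hx_deriv; auto. lra.
  - assert (u a b c < u a b m0) by (apply u_dec; lra).
    pose proof (Hx_pos c ltac:(lra)).
    assert (0 < Hx a b c * (1 - u a b c) / c).
    { unfold Rdiv. apply Rmult_lt_0_compat; [|apply Rinv_0_lt_compat; lra].
      apply Rmult_lt_0_compat; lra. }
    nra.
Qed.

Lemma Hx_min x : 0 < x -> x <> m0 -> Hx a b m0 < Hx a b x.
Proof.
  intros Hx0 Hne. destruct (Rlt_or_le x m0).
  - apply Hx_dec; lra.
  - apply Hx_inc; lra.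
Qed.

Lemma Hx_ge y : 0 < y -> y <= Hx a b y.
Proof.
  intros Hy. unfold Hx.
  assert (HG1 : G b y <= 1).
  { unfold G, E. pose proof (Sf_nonneg b y ltac:(lra)). pose proof (exp_pos (- y)).
    rewrite Rmult_minus_distr_l, <- exp_plus, Rplus_opp_l, exp_0. nra. }
  pose proof (G_pos b y Hb Hy).
  assert (HGa : 0 < G b y ^ a <= 1).
  { split. apply pow_lt; auto. rewrite <- (pow1 a). apply pow_incr. lra. }
  assert (1 <= INR (Factorial.fact a)).
  { apply (le_INR 1). pose proof (Factorial.lt_O_fact a). lia. }
  assert (y <= y / G b y ^ a).
  { apply Rmult_le_reg_r with (G b y ^ a); [lra|]. unfold Rdiv.
    rewrite Rmult_assoc, Rinv_l by lra. nra. }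
  nra.
Qed.


Definition Hd y := Hx a b y * (1 - u a b y) / y.
Definition h2v := Hx a b m0 / m0 * (INR a * p b m0 * D b m0 / E b m0 ^ 2).

Lemma h2v_pos : 0 < h2v.
Proof.
  unfold h2v. pose proof INR_a_pos. pose proof (p_pos b m0 Hm0). pose proof (D_pos b m0 Hb Hm0).
  pose proof (E_pos b m0 Hb Hm0). pose proof (Hx_pos m0 Hm0).
  apply Rmult_lt_0_compat; apply Rdiv_lt_0_compat; auto.
  apply Rmult_lt_0_compat; [apply Rmult_lt_0_compat|]; lra. apply pow_lt; lra.
Qed.

Lemma Hd_deriv_m0 : is_derive Hd m0 h2v.
Proof.
  assert (H1 : exists L, is_derive (fun y => Hx a b y * / y) m0 L).
  { eexists. apply is_derive_mult'. apply Hx_deriv; auto. apply is_derive_inv. apply is_derive_id'. lra. }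
  destruct H1 as [L HL].
  apply is_derive_ext with (fun y => (Hx a b y * / y) * (1 - u a b y)).
  { intros t. unfold Hd. unfold Rdiv. fixeq. ring. }
  eapply is_derive_eq.
  - apply is_derive_mult'. exact HL. apply is_derive_minus'. apply is_derive_const'. apply u_deriv; auto.
  - cbv beta. rewrite Hum0. unfold h2v. field. pose proof (E_pos b m0 Hb Hm0). repeat split; try lra; try (apply pow_nonzero; lra).
Qed.

Lemma Hx_taylor : exists B, forall x, 0 <= x <= 1 ->
  Rabs (Hx a b (m0 + x) - Hx a b m0 - h2v / 2 * x ^ 2) <= B * x ^ 3.
Proof.
  assert (HC : Cn 3 Hd) by (apply (Cn_deriv_inv 3 (Hx a b)); [apply Cn_Hx; auto| intros; apply Hx_deriv; auto]).
  destruct HC as [f2 [Hf2 HC2]].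
  assert (Hv : f2 m0 = h2v).
  { rewrite <- (is_derive_unique Hd m0 (f2 m0)) by auto. apply is_derive_unique. apply Hd_deriv_m0. }
  rewrite <- Hv. apply (taylor3 (Hx a b) Hd f2 m0); auto.
  - intros; apply Hx_deriv; auto.
  - unfold Hd. rewrite Hum0. unfold Rdiv. fixeq. ring.
Qed.

Lemma mu_asym : exists K1 C eta, 0 < K1 /\ 0 < C /\ 0 < eta /\
  forall s z, 0 < s -> s ^ 2 <= eta -> m0 < z -> Hx a b z = Hx a b m0 + s ^ 2 ->
  Rabs (z - m0 - K1 * s) <= C * s ^ 2 /\ z - m0 <= 1 /\ (z - m0) ^ 2 <= C * s ^ 2.
Proof.
  destruct Hx_taylor as [B HB].
  set (B' := Rmax B 1). assert (HB1 : 1 <= B') by apply Rmax_r. assert (HBB : B <= B') by apply Rmax_l.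
  set (A := h2v / 2). assert (HA : 0 < A) by (unfold A; pose proof h2v_pos; lra).
  set (rho := Rmin 1 (A / (2 * B'))).
  assert (Hr1 : 0 < rho <= 1).
  { unfold rho. split; [apply Rmin_pos; [lra| apply Rdiv_lt_0_compat; lra]| apply Rmin_l]. }
  assert (Hr2 : B' * rho <= A / 2).
  { apply Rle_trans with (B' * (A / (2 * B'))). apply Rmult_le_compat_l; [lra| apply Rmin_r].
    right. field. lra. }
  set (eta := Hx a b (m0 + rho) - Hx a b m0).
  assert (Heta : 0 < eta) by (unfold eta; pose proof (Hx_inc m0 (m0 + rho) ltac:(lra) ltac:(lra)); lra).
  set (K1 := / sqrt A).
  assert (HsA : 0 < sqrt A) by (apply sqrt_lt_R0; lra).
  assert (HK1 : 0 < K1) by (apply Rinv_0_lt_compat; lra).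
  assert (HK1A : K1 * K1 * A = 1).
  { unfold K1. rewrite <- (sqrt_sqrt A) at 3 by lra. field. lra. }
  set (C := Rmax (2 * B' / (A * A)) (2 / A)).
  assert (HC1 : 2 * B' / (A * A) <= C) by apply Rmax_l.
  assert (HC2 : 2 / A <= C) by apply Rmax_r.
  assert (HC : 0 < C) by (apply Rlt_le_trans with (2 / A); [apply Rdiv_lt_0_compat; lra| auto]).
  exists K1, C, eta. split; [auto|split; [auto|split; [auto|]]].
  intros s z Hs Hseta Hz HHz.
  set (x := z - m0). assert (Hx0 : 0 < x) by (unfold x; lra).
  assert (Hxr : x <= rho).
  { destruct (Rle_or_lt x rho) as [?|Hlt]; auto.
    pose proof (Hx_inc (m0 + rho) z ltac:(lra) ltac:(unfold x in Hlt; lra)). unfold eta in Hseta. lra. }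
  assert (Ht := HB x ltac:(lra)). replace (m0 + x) with z in Ht by (unfold x; ring).
  rewrite HHz in Ht. replace (Hx a b m0 + s ^ 2 - Hx a b m0 - h2v / 2 * x ^ 2) with (s ^ 2 - A * x ^ 2) in Ht
    by (unfold A; ring).
  assert (Hx3 : B * x ^ 3 <= B' * x ^ 3) by (apply Rmult_le_compat_r; [apply pow_le; lra| auto]).
  assert (Hx3' : B' * x ^ 3 <= A / 2 * x ^ 2).
  { replace (B' * x ^ 3) with ((B' * x) * x ^ 2) by ring. apply Rmult_le_compat_r; [apply pow_le; lra|].
    apply Rle_trans with (B' * rho); [apply Rmult_le_compat_l; lra| auto]. }
  assert (Habs : Rabs (s ^ 2 - A * x ^ 2) <= B' * x ^ 3) by lra.
  apply Rabs_le_between in Habs as [Hl Hu].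
  assert (Hxx : x ^ 2 <= 2 / A * s ^ 2).
  { apply Rmult_le_reg_l with (A / 2); [lra|]. replace (A / 2 * (2 / A * s ^ 2)) with (s ^ 2) by (field; lra). lra. }
  split; [|split; [lra|]].
  -
    assert (Hd : Rabs (x - K1 * s) * (x + K1 * s) <= B' * x ^ 3 / A).
    { replace (Rabs (x - K1 * s) * (x + K1 * s)) with (Rabs ((x - K1 * s) * (x + K1 * s)))
        by (rewrite Rabs_mult, (Rabs_right (x + K1 * s)) by nra; reflexivity).
      replace ((x - K1 * s) * (x + K1 * s)) with ((A * x ^ 2 - s ^ 2) / A) by (field_simplify; [|lra];
        replace (K1 ^ 2) with (K1 * K1 * A / A) by (field; lra); rewrite HK1A; field; lra).
      unfold Rdiv. rewrite Rabs_mult, (Rabs_right (/ A)) by (left; apply Rinv_0_lt_compat; lra).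
      apply Rmult_le_compat_r; [left; apply Rinv_0_lt_compat; lra|]. apply Rabs_le. lra. }
    assert (Hd2 : Rabs (x - K1 * s) * x <= B' * x ^ 3 / A).
    { apply Rle_trans with (Rabs (x - K1 * s) * (x + K1 * s)); auto.
      apply Rmult_le_compat_l; [apply Rabs_pos| nra]. }
    assert (Hd3 : Rabs (x - K1 * s) <= B' * x ^ 2 / A).
    { apply Rmult_le_reg_r with x; auto. replace (B' * x ^ 2 / A * x) with (B' * x ^ 3 / A) by (field; lra). auto. }
    apply Rle_trans with (B' * x ^ 2 / A); auto.
    apply Rle_trans with (2 * B' / (A * A) * s ^ 2); [|apply Rmult_le_compat_r; [apply pow_le; lra| auto]].
    replace (2 * B' / (A * A) * s ^ 2) with (B' * (2 / A * s ^ 2) / A) by (field; lra).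
    unfold Rdiv. apply Rmult_le_compat_r; [left; apply Rinv_0_lt_compat; lra|].
    apply Rmult_le_compat_l; lra.
  - apply Rle_trans with (2 / A * s ^ 2); auto. apply Rmult_le_compat_r; [apply pow_le; lra| auto].
Qed.
End S.

Lemma asym_F (f f1 : R -> R) m0 K1 C : 0 < m0 -> (forall x, 0 < x -> is_derive f x (f1 x)) -> Cn 2 f1 ->
  exists C', forall s z, 0 < s -> m0 < z -> z - m0 <= 1 -> Rabs (z - m0 - K1 * s) <= C * s ^ 2 ->
    (z - m0) ^ 2 <= C * s ^ 2 -> Rabs (f z - f m0 - f1 m0 * K1 * s) <= C' * s ^ 2.
Proof.
  intros Hm Hd HC. destruct (taylor2 f f1 m0 Hd HC Hm) as [B HB].
  exists (Rabs B * C + Rabs (f1 m0) * C). intros s z Hs Hz Hz1 Hk Hq.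
  set (x := z - m0). specialize (HB x ltac:(unfold x; lra)). replace (m0 + x) with z in HB by (unfold x; ring).
  replace (f z - f m0 - f1 m0 * K1 * s) with ((f z - f m0 - f1 m0 * x) + f1 m0 * (x - K1 * s)) by (unfold x; ring).
  eapply Rle_trans; [apply Rabs_triang|]. rewrite Rmult_plus_distr_r. apply Rplus_le_compat.
  - apply Rle_trans with (B * x ^ 2); auto. apply Rle_trans with (Rabs B * x ^ 2).
    + apply Rmult_le_compat_r; [apply pow2_ge_0| apply RRle_abs].
    + rewrite Rmult_assoc. apply Rmult_le_compat_l; [apply Rabs_pos| auto].
  - rewrite Rabs_mult, Rmult_assoc. apply Rmult_le_compat_l; [apply Rabs_pos| auto].
Qed.

Lemma rp_small delta eta : 0 < delta -> 0 < eta ->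
  exists N, forall n, (N <= n)%nat -> 0 < INR n /\ Rpower (INR n) (- delta) <= eta.
Proof.
  intros Hd He. set (X := exp (- ln eta / delta)).
  destruct (INR_archimed 1 X ltac:(lra)) as [N HN]. rewrite Rmult_1_r in HN.
  assert (HX : 0 < X) by apply exp_pos.
  exists N. intros n Hn. assert (HnX : X < INR n) by (apply Rlt_le_trans with (INR N); [lra| apply le_INR; auto]).
  split; [lra|]. unfold Rpower.
  assert (ln X <= ln (INR n)) by (apply Rcomplements.ln_le; lra).
  unfold X in H. rewrite ln_exp in H.
  assert (- delta * ln (INR n) <= ln eta).
  { apply Rmult_le_compat_l with (r := delta) in H; [|lra].
    replace (delta * (- ln eta / delta)) with (- ln eta) in H by (field; lra). lra. }
  rewrite <- (exp_ln eta) by auto.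
  destruct (Rle_lt_or_eq_dec _ _ H0) as [Hl|Hl]; [left; apply exp_increasing; auto| rewrite Hl; lra].
Qed.

Lemma rp_sq n delta : Rpower n (- (delta / 2)) ^ 2 = Rpower n (- delta).
Proof.
  simpl. rewrite Rmult_1_r, <- Rpower_plus. f_equal. field.
Qed.

Theorem lemma34 (r k : nat) :
  (2 <= r)%nat -> (2 <= k)%nat -> ~ (r = 2%nat /\ k = 2%nat) ->
  exists K1 K2 K3 : R, 0 < K1 /\ 0 < K2 /\ 0 < K3 /\
    forall delta : R, 0 < delta -> delta < 1 / 2 ->
      let c := fun n : nat => c_rk r k + Rpower (INR n) (- delta) in
      expansion (fun n => mu_c r k (c n) - mu_rk r k) K1 delta /\
      expansion (fun n => alpha_c r k (c n) - alpha0 r k) K2 delta /\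
      expansion (fun n => beta_c r k (c n) - beta0 r k) K3 delta.
Proof.
  intros Hr Hk Hne.
  set (a := (r - 1)%nat). set (b := (k - 1)%nat).
  assert (Ha : (1 <= a)%nat) by (unfold a; lia).
  assert (Hb : (1 <= b)%nat) by (unfold b; lia).
  assert (Hab : (2 <= a * b)%nat) by (unfold a, b; nia).
  destruct (exists_m0 a b Ha Hb Hab) as [m0 [Hm0 Hum0]].
  assert (HfE : forall y, Hfun r k y = Hx a b y).
  { intros y. unfold Hfun, hfun, Hx, G, E. rewrite ftail_eq. reflexivity. }
  assert (Hmin : forall x, 0 < x -> x <> m0 -> Hx a b m0 < Hx a b x) by (apply Hx_min; auto).
  assert (Hmu : mu_rk r k = m0).
  { unfold mu_rk.
    destruct (epsilon_spec (inhabits 0) (fun m => 0 < m /\ forall x, 0 < x -> Hfun r k m <= Hfun r k x))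
      as [H1 H2].
    - exists m0. split; auto. intros x Hx0. rewrite !HfE.
      destruct (Req_dec x m0) as [->|Hn]; [lra|]. left; auto.
    - set (m := epsilon _ _) in *. destruct (Req_dec m m0) as [|Hn]; auto.
      specialize (H2 m0 Hm0). rewrite !HfE in H2. specialize (Hmin m H1 Hn). lra. }
  assert (Hc : c_rk r k = Hx a b m0).
  { unfold c_rk. rewrite (is_glb_Rbar_unique _ (Finite (Hx a b m0))); [reflexivity|].
    split.
    - intros y [mu [Hmu0 ->]]. simpl. rewrite HfE.
      destruct (Req_dec mu m0) as [->|Hn]; [lra|]. left; auto.
    - intros l Hl. apply Hl. exists m0. split; auto. }
  assert (Hmuc : forall s, 0 < s -> m0 < mu_c r k (Hx a b m0 + s ^ 2) /\
                  Hx a b (mu_c r k (Hx a b m0 + s ^ 2)) = Hx a b m0 + s ^ 2).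
  { intros s Hs. set (cc := Hx a b m0 + s ^ 2).
    assert (Hs2 : 0 < s ^ 2) by (apply pow_lt; auto).
    pose proof (Hx_pos a b Hb m0 Hm0).
    set (M := m0 + cc + 1).
    destruct (Ranalysis5.IVT_interv (fun t => Hx a b t - cc) m0 M) as [z [Hz Hz']].
    - intros t Ht. apply continuity_pt_minus; [|apply continuity_pt_const; intros ? ?; auto].
      apply continuity_pt_filterlim. apply (ex_derive_continuous (Hx a b)).
      eexists. apply Hx_deriv; auto. unfold M, cc in Ht. lra.
    - unfold M, cc. lra.
    - unfold cc. lra.
    - pose proof (Hx_ge a b Ha Hb Hab M ltac:(unfold M, cc; lra)). unfold M in *. lra.
    - assert (Hzc : Hx a b z = cc) by lra.
      assert (Hzm : m0 < z) by (destruct (Req_dec z m0) as [->|]; [unfold cc in Hzc; lra| lra]).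
      assert (Hlarge : forall x, 0 < x -> cc = Hfun r k x -> x <= z).
      { intros x Hx0 Hxe. rewrite HfE in Hxe. destruct (Rle_or_lt x z) as [|Hl]; auto.
        pose proof (Hx_inc a b Ha Hb Hab m0 Hm0 Hum0 z x ltac:(lra) Hl). lra. }
      unfold mu_c.
      destruct (epsilon_spec (inhabits 0) (fun m => 0 < m /\ cc = Hfun r k m /\
              forall x, 0 < x -> cc = Hfun r k x -> x <= m)) as [H1 [H2 H3]].
      + exists z. split; [lra| split; [rewrite HfE; auto| auto]].
      + set (m := epsilon _ _) in *.
        assert (m <= z) by (apply Hlarge; auto).
        assert (z <= m) by (apply H3; [lra| rewrite HfE; auto]).
        replace m with z by lra. auto. }
  destruct (mu_asym a b Ha Hb Hab m0 Hm0 Hum0) as [K1 [C [eta [HK1 [HC [Heta Hasym]]]]]].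
  assert (HFa : forall y, ftail k y = Fa b y).
  { intros y. rewrite ftail_eq. unfold Fa, E, q. replace k with (S b) by (unfold b; lia). simpl Sf. ring. }
  assert (HFb : forall y, / INR r * y * ftail (k - 1) y = Fb r b y).
  { intros y. rewrite ftail_eq. reflexivity. }
  destruct (asym_F (Fa b) (fun y => exp (- y) * q b y) m0 K1 C Hm0) as [Ca HCa].
  { intros; apply Fa_deriv; auto. }
  { apply (Cn_deriv_inv 2 (Fa b)); [apply Cn_Fa; auto| intros; apply Fa_deriv; auto]. }
  destruct (asym_F (Fb r b) (fun y => / INR r * (G b y + y * (exp (- y) * p b y))) m0 K1 C Hm0) as [Cb HCb].
  { intros; apply Fb_deriv; auto. }
  { apply (Cn_deriv_inv 2 (Fb r b)); [apply Cn_Fb; auto| intros; apply Fb_deriv; auto]. }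
  exists K1, (exp (- m0) * q b m0 * K1), (/ INR r * (G b m0 + m0 * (exp (- m0) * p b m0)) * K1).
  assert (Hr0 : 0 < INR r) by (apply lt_0_INR; lia).
  split; [auto|split; [|split]].
  { apply Rmult_lt_0_compat; auto. apply Rmult_lt_0_compat; [apply exp_pos| apply q_pos; auto]. }
  { apply Rmult_lt_0_compat; auto. apply Rmult_lt_0_compat; [apply Rinv_0_lt_compat; auto|].
    pose proof (G_pos b m0 Hb Hm0). pose proof (exp_pos (- m0)). pose proof (p_pos b m0 Hm0).
    assert (0 < m0 * (exp (- m0) * p b m0)) by (apply Rmult_lt_0_compat; [|apply Rmult_lt_0_compat]; auto).
    lra. }
  intros delta Hd Hd2 cf.
  destruct (rp_small delta eta Hd Heta) as [N HN].
  assert (Hcom : forall n, (N <= n)%nat ->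
    let s := Rpower (INR n) (- (delta / 2)) in
    let z := mu_c r k (cf n) in
    0 < s /\ s ^ 2 = Rpower (INR n) (- delta) /\ m0 < z /\
    Rabs (z - m0 - K1 * s) <= C * s ^ 2 /\ z - m0 <= 1 /\ (z - m0) ^ 2 <= C * s ^ 2).
  { intros n Hn s z. destruct (HN n Hn) as [Hn0 Hsm].
    assert (Hs : 0 < s) by (unfold s, Rpower; apply exp_pos).
    assert (Hs2 : s ^ 2 = Rpower (INR n) (- delta)) by (unfold s; apply rp_sq).
    assert (Hcf : cf n = Hx a b m0 + s ^ 2) by (unfold cf; rewrite Hc, Hs2; reflexivity).
    destruct (Hmuc s Hs) as [Hz1 Hz2]. fold z in Hz1, Hz2. unfold z in *. rewrite Hcf in *.
    assert (Hse : s ^ 2 <= eta) by (rewrite Hs2; auto).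
    destruct (Hasym s (mu_c r k (Hx a b m0 + s ^ 2)) Hs Hse Hz1 Hz2) as [A1 [A2 A3]].
    repeat split; auto. }
  split; [|split].
  - exists C, N. intros n Hn. destruct (Hcom n Hn) as [Hs [Hs2 [Hz [A1 [A2 A3]]]]].
    rewrite Hmu, <- Hs2. exact A1.
  - exists Ca, N. intros n Hn. destruct (Hcom n Hn) as [Hs [Hs2 [Hz [A1 [A2 A3]]]]].
    unfold alpha_c, alpha0. rewrite Hmu, !HFa, <- Hs2.
    replace (exp (- m0) * q b m0 * K1 * Rpower (INR n) (- (delta / 2))) with
      ((fun y => exp (- y) * q b y) m0 * K1 * Rpower (INR n) (- (delta / 2))) by reflexivity.
    apply HCa; auto.
  - exists Cb, N. intros n Hn. destruct (Hcom n Hn) as [Hs [Hs2 [Hz [A1 [A2 A3]]]]].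
    unfold beta_c, beta0. rewrite Hmu, !HFb, <- Hs2.
    replace (/ INR r * (G b m0 + m0 * (exp (- m0) * p b m0)) * K1 * Rpower (INR n) (- (delta / 2))) with
      ((fun y => / INR r * (G b y + y * (exp (- y) * p b y))) m0 * K1 * Rpower (INR n) (- (delta / 2))) by reflexivity.
    apply HCb; auto.
Qed.
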